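(* Let $(\mathcal Y,\mu)$ be a measure space and $p,q\ge0$ $\mu$-integrable functions on $\mathcal Y$. Then $$\sup_{\phi,\psi}\Big\{\int_{\mathcal Y}(p\phi-q\psi)\,d\mu:\ 0\le\phi\le\psi\le2,\ \sup\phi\le1+\inf\psi\Big\}=\int(p-q)_+\,d\mu+\Big(\int(p-q)\,d\mu\Big)_+,$$ where the supremum is over measurable $\phi,\psi:\mathcal Y\to\mathbb R$ and $(x)_+=\max\{x,0\}$. *)

(* Defs.v *)
From HB Require Import structures.
From mathcomp Require Import all_boot all_order all_algebra.
From mathcomp Require Import all_classical all_reals all_analysis.
Set Implicit Arguments. Unset Strict Implicit. Unset Printing Implicit Defensive.

(* Main.v *)
Require Import Defs.
Set Warnings "-all".
From HB Require Import structures.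
From mathcomp Require Import all_boot all_order all_algebra.
From mathcomp Require Import all_classical all_reals all_analysis.
From mathcomp Require Import lra.
Import Order.TTheory GRing.Theory Num.Theory.
Local Open Scope classical_set_scope.
Local Open Scope ring_scope.

Theorem lemma2 (d : measure_display) (T : measurableType d) (R : realType)
  (mu : {measure set T -> \bar R}) (p q : T -> R)
  (p_ge0 : forall x, 0 <= p x) (q_ge0 : forall x, 0 <= q x)
  (p_int : mu.-integrable setT (EFin \o p))
  (q_int : mu.-integrable setT (EFin \o q)) :
  ereal_sup [set r : \bar R | exists phi psi : T -> R,
      [/\ measurable_fun setT phi, measurable_fun setT psi,
          (forall x, 0 <= phi x /\ phi x <= psi x /\ psi x <= 2),
          (forall x y, phi x <= 1 + psi y) &
          r = (\int[mu]_x ((p x * phi x - q x * psi x)%:E))%E]]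
  = (\int[mu]_x ((Num.max (p x - q x) 0)%:E)
     + Order.max (\int[mu]_x ((p x - q x)%:E)) 0)%E.
Proof.
have mp : measurable_fun setT p by apply/measurable_realfun.measurable_EFinP; exact: measurable_int p_int.
have mq : measurable_fun setT q by apply/measurable_realfun.measurable_EFinP; exact: measurable_int q_int.
have ipq : mu.-integrable setT (EFin \o (fun x => 3 * (p x + q x))).
  apply: (eq_integrable measurableT (fun x => (3:R)%:E * ((p x)%:E + (q x)%:E))%E).
  - by move=> x _ /=; rewrite EFinM EFinD.
  - apply: integrableZl; have := integrableD measurableT p_int q_int; exact.
have Hint : forall h : T -> R, measurable_fun setT h ->
    (forall x, `|h x| <= 3 * (p x + q x)) -> mu.-integrable setT (EFin \o h).
  move=> h mh hb; apply: le_integrable ipq => //.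
    exact/measurable_realfun.measurable_EFinP.
  move=> x _ /=; rewrite lee_fin (le_trans (hb x)) //.
  by rewrite ger0_norm //; have := p_ge0 x; have := q_ge0 x; lra.
pose f x := p x - q x.
have mf : measurable_fun setT f by exact: measurable_realfun.measurable_funB.
have fb : forall x, `|f x| <= p x + q x.
  by move=> x; rewrite /f; have := p_ge0 x; have := q_ge0 x;
    case: (ler0P (p x - q x)) => _; lra.
have fi : mu.-integrable setT (EFin \o f).
  apply: Hint => // x; have := fb x; have := p_ge0 x; have := q_ge0 x; lra.
have mfp : measurable_fun setT (fun x => Num.max (f x) 0).
  exact: (measurable_realfun.measurable_maxr mf (measurable_cst _)).
have fpi : mu.-integrable setT (EFin \o (fun x => Num.max (f x) 0)).
  apply: Hint => // x; have := fb x; have := p_ge0 x; have := q_ge0 x.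
  rewrite /Num.Def.maxr; case: (ltrP (f x) 0) => h.
  - by rewrite normr0; lra.
  - by rewrite !ger0_norm //; lra.
have keyint : forall c : R, (\int[mu]_x ((Num.max (f x) 0 + c * f x)%:E) =
    \int[mu]_x ((Num.max (f x) 0)%:E) + c%:E * \int[mu]_x ((f x)%:E))%E.
  move=> c; rewrite -integralZl //.
  under eq_integral do rewrite EFinD EFinM.
  by rewrite integralD //; exact: integrableZl.
have -> : (\int[mu]_x ((Num.max (p x - q x) 0)%:E) = \int[mu]_x ((Num.max (f x) 0)%:E))%E by [].
have -> : (\int[mu]_x ((p x - q x)%:E) = \int[mu]_x ((f x)%:E))%E by [].
have afin : (\int[mu]_x ((Num.max (f x) 0)%:E))%E \is a fin_num := integrable_fin_num measurableT fpi.
have bfin : (\int[mu]_x ((f x)%:E))%E \is a fin_num := integrable_fin_num measurableT fi.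
set a := (\int[mu]_x ((Num.max (f x) 0)%:E))%E in afin keyint *.
set b := (\int[mu]_x ((f x)%:E))%E in bfin keyint *.
have bound : forall c : R, 0 <= c <= 1 -> (a + c%:E * b <= a + Order.max b 0)%E.
  move=> c /andP[c0 c1]; rewrite leeD2l //.
  rewrite -(fineK bfin) -EFinM.
  case: (lerP (fine b) 0) => h.
  - by rewrite max_r ?lee_fin //; nra.
  - rewrite max_l ?lee_fin; [nra | exact: ltW].
apply/le_anti/andP; split.
- apply: ge_ereal_sup => r [phi [psi [mphi mpsi hb hc ->]]].
  pose E := [set psi y | y in setT] `|` [set 1].
  pose m := inf E.
  have E1 : E 1 by right.
  have Elb : lbound E 0.
    by move=> z [[y _ <-]|->] //; have [+ [+ +]] := hb y; lra.
  have m0 : 0 <= m by apply: lb_le_inf => //; exists 1.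
  have m1 : m <= 1 by apply: ge_inf => //; exists 0.
  have psim : forall y, m <= psi y.
    by move=> y; apply: ge_inf; [exists 0 | left; exists y].
  have phim : forall x, phi x <= 1 + m.
    move=> x; suff : phi x - 1 <= m by lra.
    apply: lb_le_inf; first by exists 1.
    move=> z [[y _ <-]|->]; last by have [+ [+ +]] := hb x; lra.
    by have := hc x y; lra.
  apply: (@le_trans _ _ (\int[mu]_x ((Num.max (f x) 0 + m * f x)%:E))%E); last first.
    by rewrite keyint; apply: bound; rewrite m0 m1.
  apply: le_integral => //.
  - apply: Hint.
      apply: measurable_realfun.measurable_funB;
        exact: measurable_realfun.measurable_funM.
    move=> x; have [h1 [h2 h3]] := hb x; have := p_ge0 x; have := q_ge0 x.
    move=> q0 p0; rewrite (le_trans (ler_normB _ _)) // !normrM !ger0_norm //; try lra.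
    nra.
  - apply: Hint.
      apply: measurable_realfun.measurable_funD => //.
      exact: measurable_realfun.measurable_funM.
    move=> x; have := fb x; have := p_ge0 x; have := q_ge0 x.
    rewrite /Num.Def.maxr; case: (ltrP (f x) 0) => h.
    + rewrite add0r normrM (ger0_norm m0) => q0 p0 fb'; nra.
    + rewrite (ger0_norm h) => q0 p0 fb'; rewrite ger0_norm; nra.
  - move=> x _; rewrite lee_fin /f.
    have [h1 [h2 h3]] := hb x; have := p_ge0 x; have := q_ge0 x.
    have := phim x; have := psim x.
    rewrite /Num.Def.maxr; case: (ltrP (p x - q x) 0) => h; nra.
- set S := ereal_sup _.
  have wit : forall c : R, 0 <= c <= 1 -> (a + c%:E * b <= S)%E.
    move=> c /andP[c0 c1]; rewrite /S; apply: ereal_sup_ubound.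
    pose psi := fun x => if 0 <= f x then 1 + c else c.
    have mpsi : measurable_fun setT psi.
      exact: (measurable_fun_ifT (f:=fun x => 0 <= f x) (g:=cst (1+c)) (h:=cst c)
        (measurable_realfun.measurable_fun_ler (measurable_cst _) mf)
        (measurable_cst _) (measurable_cst _)).
    exists psi, psi; split => //.
    + by move=> x; rewrite /psi; case: ifP => _; lra.
    + by move=> x y; rewrite /psi; case: ifP => _; case: ifP => _; lra.
    + rewrite -keyint; apply: eq_integral => x _; congr EFin.
      rewrite /psi /Num.Def.maxr; rewrite -/(f x).
      case: (ltrP (f x) 0) => h; rewrite /f in h *.
      * nra.
      * nra.
  case: (lerP (fine b) 0) => h.
  + have hb : (b <= 0)%E by rewrite -(fineK bfin) lee_fin.
    rewrite max_r //.
    by have := wit 0; rewrite mul0e; apply; rewrite lexx ler01.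
  + have hb : (0 <= b)%E by rewrite -(fineK bfin) lee_fin ltW.
    rewrite max_l //.
    by have := wit 1; rewrite mul1e; apply; rewrite lexx ler01.
Qed.
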